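(* Assume $\mathcal G$ is connected. Let $\mathrm y^\star=(\mathrm y^\star_1,\dots,\mathrm y^\star_{|\mathbb V|})\in(\mathbb R^d)^{|\mathbb V|}$ and $\zeta^\star=\mathcal E^T\mathrm y^\star$, and define $A:\mathbb R^d\to\mathbb R\cup\{+\infty\}$ by $A(\beta)=K^\star(\mathrm y^\star+\mathbf 1_{|\mathbb V|}\otimes\beta)=\sum_{i=1}^{|\mathbb V|}K_i^\star(\mathrm y_i^\star+\beta)$. If $\mathbf 0\in\sum_{i=1}^{|\mathbb V|}k_i^{-1}(\mathrm y_i^\star)$ and $A$ is strictly convex on a neighborhood of $\beta=0$, then $\mathrm y^\star$ is the unique minimizer of $K^\star(\mathrm y)$ over the set $\{\mathrm y:\mathcal E^T\mathrm y=\zeta^\star\}$.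
   Context: $\mathcal G=(\mathbb V,\mathbb E)$ is a finite graph with arbitrarily oriented edges and incidence matrix $E$ ($E_{ik}=-1$, $E_{jk}=1$ for edge $k=(i,j)$, other entries of column $k$ zero); $d\ge1$, $\mathcal E=E\otimes I_d$; $\mathbf 1_{|\mathbb V|}$ the all-ones vector. For each $i\in\mathbb V$, $k_i\subseteq\mathbb R^d\times\mathbb R^d$ is a maximal cyclically monotone relation (cyclically monotone: $\sum_{j=1}^N y_j^T(u_j-u_{j-1})\ge0$ for all $N\ge1$, $(u_1,y_1),\dots,(u_N,y_N)\in k_i$, $u_0=u_N$; maximal: not strictly contained in a larger such relation), so $k_i=\partial K_i$ for a closed proper convex $K_i:\mathbb R^d\to\mathbb R\cup\{+\infty\}$; $K_i^\star(y)=\sup_u\{y^Tu-K_i(u)\}$, $K^\star(\mathrm y)=\sum_iK_i^\star(\mathrm y_i)$, $k_i^{-1}(\mathrm y_i)=\{\mathrm u_i:(\mathrm u_i,\mathrm y_i)\in k_i\}$, and the sum of sets is the Minkowski sum. *)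

(* Defs.v *)
From HB Require Import structures.
From mathcomp Require Import all_boot.
From Stdlib Require Import Reals ClassicalEpsilon Relation_Operators.
Set Implicit Arguments. Unset Strict Implicit. Unset Printing Implicit Defensive.

Local Open Scope R_scope.

HB.instance Definition _ := Monoid.isComLaw.Build R 0 Rplus (fun x y z => esym (Rplus_assoc x y z)) Rplus_comm Rplus_0_l.

Definition sumR (n : nat) (f : 'I_n -> R) : R := \big[Rplus/0]_(i < n) f i.

Definition vec (d : nat) := 'I_d -> R.
Definition vadd d (u v : vec d) : vec d := fun c => u c + v c.
Definition vsub d (u v : vec d) : vec d := fun c => u c - v c.
Definition vscale d (t : R) (u : vec d) : vec d := fun c => t * u c.
Definition vzero d : vec d := fun _ => 0.
Definition dot d (u v : vec d) : R := sumR (fun c => u c * v c).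
Definition sqnorm d (u : vec d) : R := dot u u.

Inductive ER := Fin (x : R) | PInf.
Definition ER_le (a b : ER) : Prop :=
  match a, b with
  | Fin x, Fin y => x <= y
  | _, PInf => True
  | PInf, Fin _ => False
  end.
Definition ER_lt (a b : ER) : Prop :=
  match a, b with
  | Fin x, Fin y => x < y
  | Fin _, PInf => True
  | PInf, _ => False
  end.
Definition ER_plus (a b : ER) : ER :=
  match a, b with
  | Fin x, Fin y => Fin (x + y)
  | _, _ => PInf
  end.
Definition ER_sum (n : nat) (f : 'I_n -> ER) : ER := \big[ER_plus/Fin 0]_(i < n) f i.

(* Supremum in R ∪ {+oo} of a set of reals (used only for nonempty sets) *)
Definition ER_sup (E : R -> Prop) : ER :=
  match excluded_middle_informative (bound E /\ exists x, E x) with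
  | left H => Fin (proj1_sig (completeness E (proj1 H) (proj2 H)))
  | right _ => PInf
  end.

Definition conj d (K : vec d -> ER) (y : vec d) : ER :=
  ER_sup (fun r => exists u a, K u = Fin a /\ r = dot y u - a).

Definition proper d (K : vec d -> ER) : Prop := exists u a, K u = Fin a.
Definition convex_fun d (K : vec d -> ER) : Prop :=
  forall u v a b t, K u = Fin a -> K v = Fin b -> 0 <= t <= 1 ->
    ER_le (K (vadd (vscale t u) (vscale (1 - t) v))) (Fin (t * a + (1 - t) * b)).
(* closed = lower semicontinuous *)
Definition lsc d (K : vec d -> ER) : Prop :=
  forall u (t : R), ER_lt (Fin t) (K u) ->
    exists eps, 0 < eps /\ forall v, sqnorm (vsub v u) < eps -> ER_lt (Fin t) (K v).
Definition closed_proper_convex d (K : vec d -> ER) : Prop :=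
  proper K /\ convex_fun K /\ lsc K.

(* Subdifferential, as a relation: (u, y) ∈ ∂K *)
Definition subdiff d (K : vec d -> ER) (u y : vec d) : Prop :=
  exists a, K u = Fin a /\ forall v, ER_le (Fin (a + dot y (vsub v u))) (K v).

(* Cyclically monotone: sum_{j=1}^N y_j^T (u_j - u_{j-1}) >= 0 with u_0 = u_N;
   the sum_f_R0 index i = j - 1 runs over 0..N-1 *)
Definition cyc_mono d (k : vec d -> vec d -> Prop) : Prop :=
  forall (N : nat) (u y : nat -> vec d), (1 <= N)%nat ->
    (forall j, (1 <= j <= N)%nat -> k (u j) (y j)) ->
    0 <= sum_f_R0 (fun i => dot (y (S i))
                    (vsub (u (S i)) (if (i == 0)%nat then u N else u i)))
                  (N - 1)%nat.
Definition max_cyc_mono d (k : vec d -> vec d -> Prop) : Prop :=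
  cyc_mono k /\
  forall k' : vec d -> vec d -> Prop, cyc_mono k' -> (forall u y, k u y -> k' u y) ->
    forall u y, k' u y -> k u y.

Definition incidence n m (src dst : 'I_m -> 'I_n) (i : 'I_n) (e : 'I_m) : R :=
  (if dst e == i then 1 else 0) - (if src e == i then 1 else 0).
(* (E ⊗ I_d)^T y *)
Definition ET n m d (src dst : 'I_m -> 'I_n) (y : 'I_n -> vec d) : 'I_m -> vec d :=
  fun e c => sumR (fun i => incidence src dst i e * y i c).
Definition adj n m (src dst : 'I_m -> 'I_n) (a b : 'I_n) : Prop :=
  exists e, (src e = a /\ dst e = b) \/ (src e = b /\ dst e = a).
Definition connected n m (src dst : 'I_m -> 'I_n) : Prop :=
  forall a b, clos_refl_trans _ (adj src dst) a b.

Definition Kstar n d (K : 'I_n -> vec d -> ER) (y : 'I_n -> vec d) : ER :=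
  ER_sum (fun i => conj (K i) (y i)).

(* strict convexity on the ball of radius eps (squared-norm < eps) around 0,
   restricted to the effective domain *)
Definition strictly_convex_near0 d (A : vec d -> ER) : Prop :=
  exists eps, 0 < eps /\
  forall b1 b2 a1 a2 t, sqnorm b1 < eps -> sqnorm b2 < eps -> b1 <> b2 ->
    A b1 = Fin a1 -> A b2 = Fin a2 -> 0 < t < 1 ->
    ER_lt (A (vadd (vscale t b1) (vscale (1 - t) b2))) (Fin (t * a1 + (1 - t) * a2)).

Definition unique_minimizer (X : Type) (f : X -> ER) (S : X -> Prop) (x : X) : Prop :=
  S x /\ (forall y, S y -> ER_le (f x) (f y)) /\
  (forall y, S y -> (forall z, S z -> ER_le (f y) (f z)) -> y = x).

(* Main.v *)
Require Import Defs.
From HB Require Import structures.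
From mathcomp Require Import all_boot.
From Stdlib Require Import Reals ClassicalEpsilon Relation_Operators Lra FunctionalExtensionality.
Local Open Scope R_scope.

Lemma sumR_add n (f g : 'I_n -> R) : sumR (fun i => f i + g i) = sumR f + sumR g.
Proof. by rewrite /sumR big_split. Qed.

Lemma sumR_scal n c (f : 'I_n -> R) : sumR (fun i => c * f i) = c * sumR f.
Proof.
rewrite /sumR; apply: (big_ind2 (fun x y => x = c * y)).
- by rewrite Rmult_0_r.
- by move=> a b x y -> ->; rewrite Rmult_plus_distr_l.
- by [].
Qed.

Lemma sumR_sub n (f g : 'I_n -> R) : sumR (fun i => f i - g i) = sumR f - sumR g.
Proof.
rewrite /sumR; apply: (big_ind3 (fun x y z => x = y - z)).
- by rewrite Rminus_0_r.
- move=> a b x y z w -> ->; ring.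
- by [].
Qed.

Lemma sumR_ext n (f g : 'I_n -> R) : (forall i, f i = g i) -> sumR f = sumR g.
Proof. by move=> H; rewrite /sumR; apply: eq_bigr. Qed.

Lemma sumR_ind n (j : 'I_n) (f : 'I_n -> R) :
  sumR (fun i => (if j == i then 1 else 0) * f i) = f j.
Proof.
rewrite /sumR (bigD1 j) //= eqxx big1.
- simpl; ring.
- by move=> i H; rewrite eq_sym (negbTE H) Rmult_0_l.
Qed.

Lemma sumR_ge0 n (f : 'I_n -> R) : (forall i, 0 <= f i) -> 0 <= sumR f.
Proof.
move=> H; rewrite /sumR; apply: (big_ind (fun x => 0 <= x)) => //.
- lra.
- move=> x y; lra.
Qed.

Lemma sumR_0 n (f : 'I_n -> R) : (forall i, f i = 0) -> sumR f = 0.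
Proof. by move=> H; rewrite /sumR big1. Qed.

Lemma sumR_exch n d (F : 'I_n -> 'I_d -> R) :
  sumR (fun i => sumR (fun c => F i c)) = sumR (fun c => sumR (fun i => F i c)).
Proof. by rewrite /sumR exchange_big. Qed.

Lemma dot_lin d t s (y1 y2 u : vec d) :
  dot (fun c => t * y1 c + s * y2 c) u = t * dot y1 u + s * dot y2 u.
Proof.
rewrite /dot -!sumR_scal -sumR_add; apply: sumR_ext => c; ring.
Qed.

Lemma ET_edge n m d (src dst : 'I_m -> 'I_n) (z : 'I_n -> vec d) e c :
  ET src dst z e c = z (dst e) c - z (src e) c.
Proof.
rewrite /ET /incidence.
rewrite (@sumR_ext _ _ (fun i => (if dst e == i then 1 else 0) * z i c
   - (if src e == i then 1 else 0) * z i c)); last by move=> i; ring.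
by rewrite sumR_sub !sumR_ind.
Qed.

Lemma sup_ge (E : R -> Prop) x : E x -> ER_le (Fin x) (ER_sup E).
Proof.
move=> Ex; rewrite /ER_sup; destruct (excluded_middle_informative _) as [H|H] => //=.
destruct (completeness E (proj1 H) (proj2 H)) as [s [Hub Hlub]]; simpl.
exact: Hub.
Qed.

Lemma sup_eq (E : R -> Prop) M : E M -> (forall x, E x -> x <= M) -> ER_sup E = Fin M.
Proof.
move=> EM Hb; rewrite /ER_sup; destruct (excluded_middle_informative _) as [H|H].
- destruct (completeness E (proj1 H) (proj2 H)) as [s [Hub Hlub]]; simpl.
  f_equal; apply: Rle_antisym; [apply: Hlub; exact: Hb | exact: Hub].
- exfalso; apply: H; split; [exists M; exact: Hb | by exists M].
Qed.

Lemma sup_le (E : R -> Prop) M : (exists x, E x) -> (forall x, E x -> x <= M) ->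
  ER_le (ER_sup E) (Fin M).
Proof.
move=> Ne Hb; rewrite /ER_sup; destruct (excluded_middle_informative _) as [H|H].
- destruct (completeness E (proj1 H) (proj2 H)) as [s [Hub Hlub]]; simpl.
  apply: Hlub; exact: Hb.
- exfalso; apply: H; split; [exists M; exact: Hb | by []].
Qed.

Lemma sup_fin_inv (E : R -> Prop) c : ER_sup E = Fin c ->
  (exists x, E x) /\ (forall x, E x -> x <= c).
Proof.
rewrite /ER_sup; destruct (excluded_middle_informative _) as [H|H] => //.
destruct (completeness E (proj1 H) (proj2 H)) as [s [Hub Hlub]]; simpl.
case=> <-; split; [exact: (proj2 H) | exact: Hub].
Qed.

Definition comb t (a b : ER) : ER :=
  match a, b with Fin x, Fin y => Fin (t * x + (1 - t) * y) | _, _ => PInf end.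

Lemma conj_convex d (K : vec d -> ER) t (y1 y0 : vec d) : 0 <= t <= 1 ->
  ER_le (conj K (fun c => t * y1 c + (1 - t) * y0 c)) (comb t (conj K y1) (conj K y0)).
Proof.
move=> ht; case E1: (conj K y1) => [c1|] //; case E0: (conj K y0) => [c0|] //=.
move/sup_fin_inv: E1 => [[x [u [a [Hu Hx]]]] H1].
move/sup_fin_inv: E0 => [_ H0].
apply: sup_le; first by exists (dot (fun c => t * y1 c + (1 - t) * y0 c) u - a); exists u, a.
move=> r [v [b [Hv ->]]].
have h1 := H1 (dot y1 v - b) (ex_intro _ v (ex_intro _ b (Logic.conj Hv erefl))).
have h0 := H0 (dot y0 v - b) (ex_intro _ v (ex_intro _ b (Logic.conj Hv erefl))).
rewrite dot_lin.
have -> : t * dot y1 v + (1 - t) * dot y0 v - b = t * (dot y1 v - b) + (1 - t) * (dot y0 v - b) by ring.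
apply: Rplus_le_compat; apply: Rmult_le_compat_l; try lra; assumption.
all: by case: (conj _ _).
Qed.

Lemma ER_sum_comb n t (ft f1 f0 : 'I_n -> ER) : 0 <= t <= 1 ->
  (forall i, ER_le (ft i) (comb t (f1 i) (f0 i))) ->
  ER_le (ER_sum ft) (comb t (ER_sum f1) (ER_sum f0)).
Proof.
move=> ht H; rewrite /ER_sum.
apply: (big_ind3 (fun x y z => ER_le x (comb t y z))).
- simpl; lra.
- move=> [a|] [b|] [c|] [x|] [y|] [z|] //= h1 h2; nra.
- by move=> i _; apply: H.
Qed.

Lemma ER_sum_fin n (f : 'I_n -> ER) g : (forall i, f i = Fin (g i)) -> ER_sum f = Fin (sumR g).
Proof.
move=> H; rewrite /ER_sum /sumR.
apply: (big_ind2 (fun x y => x = Fin y)) => //.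
by move=> a b x y -> ->.
Qed.

Lemma ER_sum_ge n (f : 'I_n -> ER) g : (forall i, ER_le (Fin (g i)) (f i)) ->
  ER_le (Fin (sumR g)) (ER_sum f).
Proof.
move=> H; rewrite /ER_sum /sumR.
apply: (big_ind2 (fun x y => ER_le (Fin y) x)) => //=.
- lra.
- move=> [a|] b [c|] e //= h1 h2; lra.
- by move=> i _; apply: H.
Qed.

Lemma dot_vsub d (y v u : vec d) : dot y (vsub v u) = dot y v - dot y u.
Proof. rewrite /dot -sumR_sub; apply: sumR_ext => c; rewrite /vsub; ring. Qed.

Lemma dot_vadd_l d (y b u : vec d) : dot (vadd y b) u = dot y u + dot b u.
Proof. rewrite /dot -sumR_add; apply: sumR_ext => c; rewrite /vadd; ring. Qed.

Lemma ER_antisym x s : ER_le x (Fin s) -> ER_le (Fin s) x -> x = Fin s.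
Proof. case: x => [a|] //= h1 h2; f_equal; lra. Qed.

Theorem mainTheorem9 (n m d : nat) (src dst : 'I_m -> 'I_n)
  (k : 'I_n -> vec d -> vec d -> Prop) (K : 'I_n -> vec d -> ER)
  (hd : (1 <= d)%nat)
  (hconn : connected src dst)
  (hk : forall i, max_cyc_mono (k i))
  (hK : forall i, closed_proper_convex (K i))
  (hkK : forall i u y, k i u y <-> subdiff (K i) u y)
  (ystar : 'I_n -> vec d)
  (h0 : exists u : 'I_n -> vec d,
          (forall i, k i (u i) (ystar i)) /\
          (forall c, sumR (fun i => u i c) = 0%R))
  (hA : strictly_convex_near0
          (fun beta : vec d => Kstar K (fun i => vadd (ystar i) beta))) :
  unique_minimizer (Kstar K)
    (fun y => ET src dst y = ET src dst ystar) ystar.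
Proof.
have [u [hu hsum]] := h0.
have Hi : forall i, exists ci, conj (K i) (ystar i) = Fin ci /\
   forall b, ER_le (Fin (ci + dot b (u i))) (conj (K i) (vadd (ystar i) b)).
{ move=> i; have := hu i; rewrite hkK => -[a0 [Ha0 Hs]].
  exists (dot (ystar i) (u i) - a0); split.
  - apply: sup_eq; first by exists (u i), a0.
    move=> x [v [b [Hv ->]]]; have := Hs v; rewrite Hv /= dot_vsub => h; lra.
  - move=> b; apply: sup_ge; exists (u i), a0; split => //.
    rewrite dot_vadd_l; ring. }
pose cst i := match conj (K i) (ystar i) with Fin x => x | PInf => 0 end.
have Hc : forall i, conj (K i) (ystar i) = Fin (cst i).
{ by move=> i; case: (Hi i) => ci [E _]; rewrite /cst E. }
pose A := fun beta : vec d => Kstar K (fun i => vadd (ystar i) beta).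
have Hlow : forall b, ER_le (Fin (sumR cst)) (A b).
{ move=> b.
  have : ER_le (Fin (sumR (fun i => cst i + dot b (u i)))) (A b).
  { apply: ER_sum_ge => i; case: (Hi i) => ci [E H].
    have -> : cst i = ci by rewrite /cst E.
    exact: H. }
  rewrite sumR_add.
  have -> : sumR (fun i => dot b (u i)) = 0.
  { rewrite /dot sumR_exch; apply: sumR_0 => c.
    by rewrite sumR_scal hsum Rmult_0_r. }
  by rewrite Rplus_0_r. }
have HKs : Kstar K ystar = Fin (sumR cst) by apply: ER_sum_fin.
have HA0 : A (@vzero d) = Fin (sumR cst).
{ rewrite /A -HKs; f_equal; apply: functional_extensionality => i.
  apply: functional_extensionality => c; rewrite /vadd /vzero; ring. }
have Hfeas : forall y, ET src dst y = ET src dst ystar ->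
   exists b, y = fun i => vadd (ystar i) b.
{ move=> y Hy.
  have Hz : forall a b c, y a c - ystar a c = y b c - ystar b c.
  { move=> a b c; elim: (hconn a b) => //.
    - move=> x z [e [[<- <-]|[<- <-]]];
      have := f_equal (fun f => f e c) Hy; rewrite /= !ET_edge => h; lra.
    - move=> x z w _ h1 _ h2; lra. }
  case: (boolP (0 < n)%nat) => hn.
  - exists (fun c => y (Ordinal hn) c - ystar (Ordinal hn) c).
    apply: functional_extensionality => i; apply: functional_extensionality => c.
    rewrite /vadd (Hz (Ordinal hn) i c); ring.
  - exists (@vzero d); apply: functional_extensionality => i.
    by have := leq_ltn_trans (leq0n i) (ltn_ord i); rewrite (negbTE hn). }
split; first by [].
split.
{ move=> y /Hfeas [b ->]; rewrite HKs; exact: Hlow. }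
move=> y /Hfeas [b Eb] Hmin; rewrite Eb.
have HAb : A b = Fin (sumR cst).
{ apply: ER_antisym; last exact: Hlow.
  have := Hmin ystar erefl; rewrite Eb HKs; exact. }
suff -> : b = @vzero d.
{ apply: functional_extensionality => i.
  apply: functional_extensionality => c; rewrite /vadd /vzero; ring. }
apply: NNPP => Hb.
have [eps [heps Hsc]] := hA.
set S0 := sumR cst in Hlow HKs HA0 HAb.
have HN : 0 <= sqnorm b by apply: sumR_ge0 => c; nra.
set N := sqnorm b in HN.
pose t := eps / (eps + N + 1).
have htN : t * (eps + N + 1) = eps by rewrite /t; field; lra.
have ht0 : 0 < t by rewrite /t; apply: Rdiv_lt_0_compat; lra.
have ht1 : t < 1 by nra.
have Hconv : ER_le (A (vscale t b)) (comb t (A b) (A (@vzero d))).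
{ rewrite /A /Kstar; apply: ER_sum_comb => [|i]; first lra.
  have -> : vadd (ystar i) (vscale t b) = (fun c => t * vadd (ystar i) b c
      + (1 - t) * vadd (ystar i) (@vzero d) c).
  { apply: functional_extensionality => c; rewrite /vadd /vscale /vzero; ring. }
  apply: conj_convex; lra. }
rewrite HAb HA0 /= in Hconv.
have HAt : A (vscale t b) = Fin S0.
{ apply: ER_antisym; last exact: Hlow.
  case: (A (vscale t b)) Hconv => [a1|] //= h; lra. }
have Hsqt : sqnorm (vscale t b) = t * t * N.
{ rewrite /N /sqnorm /dot -sumR_scal; apply: sumR_ext => c; rewrite /vscale; ring. }
have Hsq0 : sqnorm (@vzero d) = 0.
{ by rewrite /sqnorm /dot; apply: sumR_0 => c; rewrite /vzero Rmult_0_l. }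
have Hne : vscale t b <> @vzero d.
{ move=> E; apply: Hb; apply: functional_extensionality => c.
  have := f_equal (fun f => f c) E; rewrite /vscale /vzero /= => h.
  case: (Rmult_integral _ _ h) => // h'; lra. }
have := Hsc (vscale t b) (@vzero d) S0 S0 (1/2) ltac:(rewrite Hsqt; nra)
  ltac:(rewrite Hsq0; lra) Hne HAt HA0 ltac:(lra).
have := Hlow (vadd (vscale (1/2) (vscale t b)) (vscale (1 - 1/2) (@vzero d))).
rewrite /A.
case: (Kstar _ _) => [x|] //= h1 h2; lra.
Qed.
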